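(* Let $G=(V,E,T,c)$ be a $k$-terminal network. For every $S\subset T$ with $S\neq\emptyset,T$ there exist $S_1,\dots,S_m\in\mathcal{T}_e(G)$ ($m\ge1$) such that the sets $E_{S_1},\dots,E_{S_m}$ are pairwise disjoint and $E_S=E_{S_1}\cup\dots\cup E_{S_m}$.
   Context: A $k$-terminal network $G=(V,E,T,c)$ is a finite connected undirected graph $(V,E)$ with edge weights (capacities) $c:E\to\mathbb{R}_{>0}$ and a set $T\subseteq V$ of $|T|=k$ terminals. For $F\subseteq E$ let $c(F)=\sum_{e\in F}c(e)$; for $W\subseteq V$ let $\delta(W)$ be the set of edges with exactly one endpoint in $W$. For $S\subset T$ with $S\neq\emptyset,T$, write $\bar S=T\setminus S$; a cut $(W,V\setminus W)$ is $S$-separating if $W\cap T\in\{S,\bar S\}$, and $\mathrm{mincut}_G(S)$ is the minimum of $c(\delta(W))$ over all $S$-separating cuts. It is assumed (e.g. by a generic perturbation of the weights) that the minimizing cutset is unique; it is denoted $E_S$ (so $E_S=E_{\bar S}$). For $F\subseteq E$, $CC(F)$ denotes the set of vertex sets of connected components of $(V,E\setminus F)$. The cutset $E_S$ is called elementary if $|CC(E_S)|=2$, and $\mathcal{T}_e(G)=\{S\subset T:\ S\neq\emptyset,T,\ |CC(E_S)|=2\}$. *)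

(* Defs.v *)
From HB Require Import structures.
From mathcomp Require Import all_boot all_order all_algebra.
Set Implicit Arguments. Unset Strict Implicit. Unset Printing Implicit Defensive.
Import Order.TTheory GRing.Theory Num.Theory.

(* A (multi)graph on a finite vertex type V with finite edge type E;
   edge e is undirected with endpoints ep1 e and ep2 e. *)
Section Network.
Variables (V E : finType) (ep1 ep2 : E -> V).

Definition adj (F : {set E}) : rel V :=
  fun x y => [exists e, (e \notin F) &&
     (((ep1 e == x) && (ep2 e == y)) || ((ep1 e == y) && (ep2 e == x)))].

Definition connected_graph : Prop := forall x y : V, connect (adj set0) x y.

Definition CC (F : {set E}) : {set {set V}} :=
  [set [set y | connect (adj F) x y] | x : V].

Definition delta (W : {set V}) : {set E} :=
  [set e | (ep1 e \in W) != (ep2 e \in W)].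

Variable R : realFieldType.
Variable c : E -> R.

Definition cap (F : {set E}) : R := (\sum_(e in F) c e)%R.

Variable T : {set V}.

Definition proper_terminal_subset (S : {set V}) : Prop :=
  [/\ S \subset T, S != set0 & S != T].

Definition separating (S W : {set V}) : bool :=
  (W :&: T == S) || (W :&: T == T :\: S).

Definition is_min_cutset (S : {set V}) (F : {set E}) : Prop :=
  exists2 W : {set V}, separating S W &
    F = delta W /\ (forall W' : {set V}, separating S W' -> (cap F <= cap (delta W'))%R).

(* uniqueness of minimizing cutsets (so E_S is well defined) *)
Definition unique_min_cutsets : Prop :=
  forall S, proper_terminal_subset S ->
    forall F F', is_min_cutset S F -> is_min_cutset S F' -> F = F'.

(* S \in T_e(G): E_S is elementary *)
Definition in_Te (S : {set V}) : Prop :=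
  proper_terminal_subset S /\
  exists2 F, is_min_cutset S F & #|CC F| = 2.

End Network.

(* Main.v *)
Require Import Defs.
From HB Require Import structures.
From mathcomp Require Import all_boot all_order all_algebra.
From mathcomp Require Import zify ring lra.
Import Order.TTheory GRing.Theory Num.Theory.
Set Implicit Arguments. Unset Strict Implicit. Unset Printing Implicit Defensive.

Section Aux.
Variables (V E : finType) (ep1 ep2 : E -> V).

Local Notation adj := (adj ep1 ep2).
Local Notation delta := (delta ep1 ep2).
Definition comp (F : {set E}) (x : V) : {set V} := [set y | connect (adj F) x y].

Lemma connect_ind (e : rel V) (P : V -> Prop) x :
  P x -> (forall u v, connect e x u -> P u -> e u v -> P v) ->
  forall y, connect e x y -> P y.
Proof.
move=> Px step y /connectP [p pth ->].
suff: forall p z, connect e x z -> P z -> path e z p -> P (last z p).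
  by move=> H; apply: H pth => //.
elim=> [|v q IH] z cz Pz //= /andP [ezv pq].
apply: IH pq.
- by apply: connect_trans cz (connect1 ezv).
- by apply: step ezv.
Qed.

Lemma adjI (F : {set E}) e u v : e \notin F ->
  ((ep1 e == u) && (ep2 e == v)) || ((ep1 e == v) && (ep2 e == u)) -> adj F u v.
Proof. by move=> H1 H2; apply/existsP; exists e; rewrite H1. Qed.

Lemma adj_sym (F : {set E}) : symmetric (adj F).
Proof.
suff H: forall x y, adj F x y -> adj F y x.
  by move=> x y; apply/idP/idP; apply: H.
move=> x y /existsP [e /andP [H1 H2]]; apply: (adjI H1).
by rewrite orbC.
Qed.

Lemma adjE (F : {set E}) u v : adj F u v ->
  exists2 e, e \notin F & ((ep1 e == u) && (ep2 e == v)) || ((ep1 e == v) && (ep2 e == u)).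
Proof. by move=> /existsP [e /andP [H1 H2]]; exists e. Qed.

Lemma delta_closed (Y : {set V}) u w : connect (adj (delta Y)) u w -> (u \in Y) = (w \in Y).
Proof.
apply: (connect_ind (P := fun w => (u \in Y) = (w \in Y))) => // a b _ -> /adjE [e].
rewrite inE negbK => /eqP He.
by case/orP => /andP [/eqP <- /eqP <-].
Qed.

Lemma delta_comp (F : {set E}) x : delta (comp F x) \subset F.
Proof.
apply/subsetP => e; rewrite !inE; apply: contraR => He.
have H: adj F (ep1 e) (ep2 e) by apply: (adjI He); rewrite !eqxx.
apply/eqP; apply/idP/idP => Hc.
  by apply: connect_trans Hc (connect1 H).
by apply: connect_trans Hc (connect1 _); rewrite adj_sym.
Qed.

Lemma connect_mono (F F' : {set E}) a b : connect (adj F) a b ->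
  (forall e, e \notin F -> ep1 e \in comp F a -> ep2 e \in comp F a -> e \notin F') ->
  connect (adj F') a b.
Proof.
move=> cab H; apply: (connect_ind (P := fun v => connect (adj F') a v)) cab => //.
move=> u v cu cu' /adjE [e He Hend].
have cv : connect (adj F) a v.
  by apply: connect_trans cu (connect1 _); apply: (adjI He).
apply: connect_trans cu' (connect1 _); apply: (adjI _ Hend); apply: H He _ _.
  by case/orP: Hend => /andP [/eqP -> _]; rewrite inE.
by case/orP: Hend => /andP [_ /eqP ->]; rewrite inE.
Qed.


Lemma deltaE (Y : {set V}) e : (e \in delta Y) = ((ep1 e \in Y) != (ep2 e \in Y)).
Proof. by rewrite inE. Qed.

Lemma fneq (b : bool) : (false != b) = b. Proof. by case: b. Qed.
Lemma tneq (b : bool) : (true != b) = ~~ b. Proof. by case: b. Qed.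
Lemma neqf (b : bool) : (b != false) = b. Proof. by case: b. Qed.

Lemma disjI (A B : {set E}) : (forall x, x \in A -> x \in B -> False) -> [disjoint A & B].
Proof.
move=> H; rewrite disjoint_subset; apply/subsetP => x Hx; rewrite inE.
by apply/negP => /(H x Hx).
Qed.

Lemma comp_eq (F : {set E}) a w : w \in comp F a -> comp F a = comp F w.
Proof.
rewrite inE => H; apply/setP => y; rewrite !inE; apply/idP/idP => Hy.
  by apply: connect_trans _ Hy; rewrite (sym_connect_sym (adj_sym F)).
by apply: connect_trans H Hy.
Qed.

Lemma conn_delta (Hc : connected_graph ep1 ep2) (Y : {set V}) y w :
  y \in Y -> w \notin Y -> delta Y != set0.
Proof.
move=> Hy Hw; apply/negP => /eqP H0.
have: connect (adj (delta Y)) y w by rewrite H0; apply: Hc.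
by move/delta_closed; rewrite Hy (negbTE Hw).
Qed.

Lemma bond (Hc : connected_graph ep1 ep2) (X' : {set V}) x z :
  x \in X' ->
  (forall w, w \in X' -> forall F' : {set E},
     (forall e, ep1 e \in X' -> ep2 e \in X' -> e \notin F') -> connect (adj F') x w) ->
  z \notin X' ->
  let Z := comp (delta X') z in
  [/\ delta Z \subset delta X', (forall w, w \in Z -> w \notin X'),
      delta Z != set0 & #|CC ep1 ep2 (delta Z)| = 2].
Proof.
move=> Hx Xconn Hz Z.
have g1 : delta Z \subset delta X' by apply: delta_comp.
have g2 : forall w, w \in Z -> w \notin X'.
  by move=> w; rewrite inE => /delta_closed <-.
have Hz' : z \in Z by rewrite inE connect0.
have Hxz : x \notin Z by apply: contraL Hx; apply: g2.
have g3 := conn_delta Hc Hz' Hxz.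
have ZZ : forall w, w \in Z -> connect (adj (delta Z)) z w.
  move=> w; rewrite inE => Hw; apply: connect_mono Hw _ => e _ H1 H2.
  by rewrite inE H1 H2.
have XX' : forall w, w \in X' -> connect (adj (delta Z)) x w.
  move=> w Hw; apply: (Xconn w Hw (delta Z)) => e H1 H2.
  by rewrite inE (negbTE (contraL (g2 _) H1)) (negbTE (contraL (g2 _) H2)).
have XX : forall w, w \notin Z -> connect (adj (delta Z)) x w.
  suff H: forall w, connect (adj set0) x w -> w \in Z \/ connect (adj (delta Z)) x w.
    by move=> w Hw; case: (H w (Hc x w)) => //; rewrite (negbTE Hw).
  apply: connect_ind; first by right; exact: connect0.
  move=> u v _ Hu /adjE [e _ Hend].
  case Hv: (v \in Z); first by left.
  right; case HuZ: (u \in Z).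
    have HeZ : e \in delta Z.
      by rewrite inE; case/orP: Hend => /andP[/eqP -> /eqP ->]; rewrite HuZ Hv.
    have HeX : e \in delta X' := subsetP g1 _ HeZ.
    apply: XX'; move: HeX; rewrite inE.
    by case/orP: Hend => /andP[/eqP -> /eqP ->]; rewrite (negbTE (g2 _ HuZ));
      case: (v \in X').
  have Hcu : connect (adj (delta Z)) x u by case: Hu => //; rewrite HuZ.
  apply: connect_trans Hcu (connect1 _); apply: (adjI _ Hend).
  by rewrite inE; case/orP: Hend => /andP[/eqP -> /eqP ->]; rewrite HuZ Hv.
have compZ : forall v, v \in Z -> comp (delta Z) v = Z.
  move=> v Hv; apply/setP => w; rewrite [in LHS]inE.
  apply/idP/idP => [/delta_closed <- // | Hw].
  apply: connect_trans (ZZ w Hw).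
  by rewrite (sym_connect_sym (adj_sym _)); apply: ZZ.
have compNZ : forall v, v \notin Z -> comp (delta Z) v = ~: Z.
  move=> v Hv; apply/setP => w; rewrite [in LHS]inE [in RHS]inE.
  apply/idP/idP => [/delta_closed <- // | Hw].
  apply: connect_trans (XX w Hw).
  by rewrite (sym_connect_sym (adj_sym _)); apply: XX.
have HCC : CC ep1 ep2 (delta Z) = [set Z; ~: Z].
  have -> : CC ep1 ep2 (delta Z) = [set comp (delta Z) v | v : V] by [].
  apply/setP => K; apply/imsetP/set2P => [[v _ ->] | [->|->]].
  - case Hv: (v \in Z); first by left; apply: compZ.
    by right; apply: compNZ; rewrite Hv.
  - by exists z => //; rewrite compZ.
  - by exists x => //; rewrite compNZ.
split => //; rewrite HCC cards2.
suff -> : Z != ~: Z by [].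
apply/eqP => H; have: z \in ~: Z by rewrite -H.
by rewrite inE Hz'.
Qed.


Lemma decomp (Hc : connected_graph ep1 ep2) n : forall X : {set V}, #|delta X| <= n ->
  exists P : {set {set V}},
  [/\ (forall Z, Z \in P -> delta Z != set0 /\ #|CC ep1 ep2 (delta Z)| = 2),
      (forall Z Z', Z \in P -> Z' \in P -> Z != Z' -> [disjoint delta Z & delta Z']) &
      (forall e, e \in delta X <-> exists2 Z, Z \in P & e \in delta Z)].
Proof.
have emp : forall X : {set V}, delta X = set0 -> exists P : {set {set V}},
  [/\ (forall Z, Z \in P -> delta Z != set0 /\ #|CC ep1 ep2 (delta Z)| = 2),
      (forall Z Z', Z \in P -> Z' \in P -> Z != Z' -> [disjoint delta Z & delta Z']) &
      (forall e, e \in delta X <-> exists2 Z, Z \in P & e \in delta Z)].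
  move=> X H0; exists set0; split => //; first by move=> Z; rewrite inE.
    by move=> Z Z'; rewrite inE.
  by move=> e; rewrite H0 inE; split => // [[Z]]; rewrite inE.
elim: n => [|n IH] X HX.
  by apply: emp; apply/eqP; rewrite -cards_eq0 -leqn0.
case: (boolP (delta X == set0)) => [/eqP H0|Hne]; first by apply: emp.
have [e0 He0] : exists e0, e0 \in delta X by apply/set0Pn.
have [x [y0 [Hx Hy0]]] : exists x y0, x \in X /\ y0 \notin X.
  move: He0; rewrite inE; case Ha: (ep1 e0 \in X); case Hb: (ep2 e0 \in X) => //= _.
    by exists (ep1 e0), (ep2 e0); rewrite Ha Hb.
  by exists (ep2 e0), (ep1 e0); rewrite Ha Hb.
set X' := comp (delta X) x.
have memX' : forall w, (w \in X') = connect (adj (delta X)) x w by move=> w; rewrite inE.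
have f2 : delta X' \subset delta X by apply: delta_comp.
have Xconn : forall w, w \in X' -> forall F' : {set E},
     (forall e, ep1 e \in X' -> ep2 e \in X' -> e \notin F') -> connect (adj F') x w.
  move=> w; rewrite memX' => Hw F' HF; apply: connect_mono Hw _ => e _; apply: HF.
clearbody X'.
have f1 : forall w, w \in X' -> w \in X by move=> w; rewrite memX' => /delta_closed <-.
have Hx' : x \in X' by rewrite memX' connect0.
have Hy0' : y0 \notin X' by apply: contra Hy0; apply: f1.
have f4 := conn_delta Hc Hx' Hy0'.
set X'' := X :\: X'.
have f5 : delta X'' = delta X :\: delta X'.
  apply/setP => e.
  have h1 : (ep1 e \in X') ==> (ep1 e \in X) by apply/implyP; apply: f1.
  have h2 : (ep2 e \in X') ==> (ep2 e \in X) by apply/implyP; apply: f1.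
  have h3 : (e \in delta X') ==> (e \in delta X) by apply/implyP; apply/subsetP.
  move: h1 h2 h3; rewrite !inE.
  by case: (ep1 e \in X); case: (ep2 e \in X); case: (ep1 e \in X'); case: (ep2 e \in X').
have f6 : #|delta X''| <= n.
  rewrite f5 cardsD (setIidPr f2).
  have := subset_leq_card f2; have : 0 < #|delta X'| by rewrite card_gt0.
  move: HX; lia.
have [P'' [IH1 IH2 IH3]] := IH X'' f6.
set P' := [set comp (delta X') z | z in ~: X'].
have sub'' : forall Z, Z \in P'' -> delta Z \subset delta X''.
  by move=> Z HZ; apply/subsetP => e He; apply/IH3; exists Z.
have sub' : forall Z, Z \in P' -> delta Z \subset delta X'.
  by move=> Z /imsetP [z _ ->]; apply: delta_comp.
have cross : forall Z Z', Z \in P' -> Z' \in P'' -> [disjoint delta Z & delta Z'].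
  move=> Z Z' HZ HZ'; apply: disjI => e H1 H2.
  move: (subsetP (sub' _ HZ) _ H1) (subsetP (sub'' _ HZ') _ H2).
  by move=> A; rewrite f5 in_setD A.
exists (P' :|: P''); split.
- move=> Z; rewrite inE => /orP [/imsetP [z Hz ->] | HZ]; last exact: IH1.
  rewrite inE in Hz.
  by case: (bond Hc Hx' Xconn Hz).
- move=> Z Z'; rewrite !inE => /orP [HZ | HZ] /orP [HZ' | HZ'] Hne'.
  + move: HZ HZ' Hne' => /imsetP [z1 Hz1 ->] /imsetP [z2 Hz2 ->] Hne'.
    rewrite inE in Hz1; rewrite inE in Hz2.
    case: (bond Hc Hx' Xconn Hz1) => _ g21 _ _.
    case: (bond Hc Hx' Xconn Hz2) => _ g22 _ _.
    apply: disjI => e H1 H2.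
    have HeX : e \in delta X' := subsetP (delta_comp _ _) _ H1.
    move: H1 H2 HeX; rewrite !deltaE.
    case Ha: (ep1 e \in X') => /=.
      rewrite (negbTE (contraL (g21 _) Ha)) (negbTE (contraL (g22 _) Ha)) !fneq => H1 H2 _.
      move: Hne'; rewrite (comp_eq H1) (comp_eq H2).
      by rewrite eqxx.
    move=> H1 H2; rewrite fneq => Hb.
    rewrite (negbTE (contraL (g21 _) Hb)) (negbTE (contraL (g22 _) Hb)) !neqf in H1 H2.
    move: Hne'; rewrite (comp_eq H1) (comp_eq H2).
    by rewrite eqxx.
  + exact: cross.
  + by rewrite disjoint_sym; apply: cross.
  + exact: IH2.
- move=> e; split => [He | [Z]].
    case HeX: (e \in delta X').
      have [w Hw Hw'] : exists2 w, w \notin X' & e \in delta (comp (delta X') w).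
        move: HeX; rewrite deltaE; case Ha: (ep1 e \in X'); rewrite ?fneq ?tneq => Hb.
          exists (ep2 e) => //; rewrite deltaE [ep2 e \in comp _ _]inE connect0.
          case: (bond Hc Hx' Xconn Hb) => _ g2 _ _.
          by rewrite (negbTE (contraL (g2 _) Ha)).
        have Ha' : ep1 e \notin X' by rewrite Ha.
        exists (ep1 e) => //.
        rewrite deltaE [ep1 e \in comp _ _]inE connect0.
        case: (bond Hc Hx' Xconn Ha') => _ g2 _ _.
        by rewrite (negbTE (contraL (g2 _) Hb)).
      exists (comp (delta X') w) => //; rewrite inE; apply/orP; left.
      by apply/imsetP; exists w; rewrite ?inE.
    have [Z HZ HeZ] : exists2 Z, Z \in P'' & e \in delta Z.
      by apply/IH3; rewrite f5 inE HeX.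
    by exists Z => //; rewrite inE HZ orbT.
  rewrite inE => /orP [HZ | HZ] HeZ.
    by apply: (subsetP f2); apply: (subsetP (sub' _ HZ)).
  have := subsetP (sub'' _ HZ) _ HeZ; rewrite f5 inE.
  by case/andP.
Qed.

End Aux.

Section Cuts.
Variables (V E : finType) (ep1 ep2 : E -> V) (R : realFieldType) (c : E -> R) (T : {set V}).
Hypothesis Hpos : forall e, (0 < c e)%R.
Local Notation delta := (delta ep1 ep2).
Local Notation cap := (cap c).

Definition symd (X : finType) (A B : {set X}) := [set x | (x \in A) != (x \in B)].

Lemma delta_symd (A B : {set V}) : delta (symd A B) = symd (delta A) (delta B).
Proof.
apply/setP => e; rewrite !inE.
by case: (ep1 e \in A); case: (ep2 e \in A); case: (ep1 e \in B); case: (ep2 e \in B).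
Qed.

Lemma capD (F G : {set E}) : G \subset F -> cap F = (cap G + cap (F :\: G))%R.
Proof. by move=> H; rewrite /cap (big_setID G) (setIidPr H). Qed.

Lemma cap_ge0 (F : {set E}) : (0 <= cap F)%R.
Proof. by apply: sumr_ge0 => e _; apply: ltW. Qed.

Lemma cap_sub (F G : {set E}) : G \subset F -> (cap G <= cap F)%R.
Proof. by move=> H; rewrite (capD H) lerDl cap_ge0. Qed.

Lemma cap_symd (A B : {set E}) : (cap (symd A B) <= cap A + cap B)%R.
Proof.
have H1 : symd A B \subset A :|: B.
  by apply/subsetP => x; rewrite !inE; case: (x \in A); case: (x \in B).
have H2 : A \subset A :|: B by apply: subsetUl.
apply: le_trans (cap_sub H1) _; rewrite (capD H2) lerD2l; apply: cap_sub.
by apply/subsetP => x; rewrite !inE; case: (x \in A); case: (x \in B).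
Qed.

Lemma cap_pos (F : {set E}) : F != set0 -> (0 < cap F)%R.
Proof.
case/set0Pn => e He.
have H : [set e] \subset F by rewrite sub1set.
rewrite (capD H) /cap big_set1.
have := Hpos e; have := cap_ge0 (F :\: [set e]); rewrite /cap; lra.
Qed.

Lemma split_cap (W Z : {set V}) : delta Z \subset delta W ->
  delta (symd W Z) = delta W :\: delta Z /\
  cap (delta W) = (cap (delta Z) + cap (delta (symd W Z)))%R.
Proof.
move=> H.
have E1 : delta (symd W Z) = delta W :\: delta Z.
  rewrite delta_symd; apply/setP => e; move: (subsetP H e).
  rewrite [e \in symd _ _]inE in_setD; case: (e \in delta Z); case: (e \in delta W) => //.
  by move=> /(_ isT).
by split => //; rewrite E1; apply: capD.
Qed.


Lemma sep_term (S W Z : {set V}) : separating T S W -> Z :&: T = set0 -> separating T S (symd W Z).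
Proof.
move=> hs H0; rewrite /separating (_ : symd W Z :&: T = W :&: T) //.
apply/setP => v; have /setP/(_ v) := H0; rewrite !inE.
by case: (v \in W); case: (v \in Z); case: (v \in T).
Qed.

Lemma sep_min (S W Z Y : {set V}) : S \subset T -> separating T S W ->
  separating T (Z :&: T) Y -> separating T S (symd Y (symd W Z)).
Proof.
move=> hST /orP [/eqP hW | /eqP hW] /orP [/eqP hY | /eqP hY]; apply/orP;
  [left|right|right|left]; apply/eqP/setP => v;
  have /setP/(_ v) := hW; have /setP/(_ v) := hY;
  (have hs : (v \in S) ==> (v \in T) by apply/implyP/(subsetP hST));
  move: hs; rewrite !inE;
  by case: (v \in S); case: (v \in T); case: (v \in W); case: (v \in Y); case: (v \in Z).
Qed.

Lemma min_Z (S W Z : {set V}) (ES : {set E}) : S \subset T -> separating T S W -> ES = delta W ->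
  (forall W', separating T S W' -> (cap ES <= cap (delta W'))%R) ->
  delta Z \subset ES ->
  forall Y, separating T (Z :&: T) Y -> (cap (delta Z) <= cap (delta Y))%R.
Proof.
move=> hST hs hE hmin hZ Y hY; rewrite hE in hZ hmin.
have [E1 E2] := split_cap hZ.
have h1 := hmin _ (sep_min hST hs hY); rewrite delta_symd in h1.
have h2 := cap_symd (delta Y) (delta (symd W Z)).
by move: h1 h2; rewrite E2; lra.
Qed.

Lemma term_Z (S W Z : {set V}) (ES : {set E}) : separating T S W -> ES = delta W ->
  (forall W', separating T S W' -> (cap ES <= cap (delta W'))%R) ->
  delta Z \subset ES -> Z :&: T = set0 -> delta Z = set0.
Proof.
move=> hs hE hmin hZ h0; rewrite hE in hZ hmin.
apply/eqP; apply/negPn/negP => hne.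
have [E1 E2] := split_cap hZ.
have h1 := hmin _ (sep_term hs h0).
have h2 := cap_pos hne.
by move: h1; rewrite E2; lra.
Qed.

End Cuts.
Theorem theorem2p5 (V E : finType) (ep1 ep2 : E -> V)
  (R : realFieldType) (c : E -> R) (T : {set V}) :
  connected_graph ep1 ep2 ->
  (forall e, (0 < c e)%R) ->
  unique_min_cutsets ep1 ep2 c T ->
  forall (S : {set V}) (ES : {set E}),
    proper_terminal_subset T S ->
    is_min_cutset ep1 ep2 c T S ES ->
    exists m : nat, exists (Ss : 'I_m -> {set V}) (Fs : 'I_m -> {set E}),
      [/\ (0 < m)%N,
          (forall i, in_Te ep1 ep2 c T (Ss i)),
          (forall i, is_min_cutset ep1 ep2 c T (Ss i) (Fs i)),
          (forall i j, i != j -> [disjoint Fs i & Fs j]) &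
          ES = \bigcup_(i < m) Fs i].
Proof.
move=> Hc Hpos Huniq S ES [hST hS0 hST'] [W hs [hE hmin]].
have [P [P1 P2 P3]] := @decomp V E ep1 ep2 Hc _ W (leqnn _).
have hZsub : forall Z, Z \in P -> delta ep1 ep2 Z \subset ES.
  by move=> Z HZ; apply/subsetP => e He; rewrite hE; apply/P3; exists Z.
have Te : forall Z, Z \in P ->
    in_Te ep1 ep2 c T (Z :&: T) /\ is_min_cutset ep1 ep2 c T (Z :&: T) (delta ep1 ep2 Z).
  move=> Z HZ; have [hne hcc] := P1 Z HZ.
  have mc : is_min_cutset ep1 ep2 c T (Z :&: T) (delta ep1 ep2 Z).
    exists Z; first by rewrite /separating eqxx.
    by split => //; apply: (min_Z Hpos hST hs hE hmin (hZsub Z HZ)).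
  split => //; split; last by exists (delta ep1 ep2 Z).
  split; first exact: subsetIr.
  - apply/eqP => h0; move: hne.
    by rewrite (term_Z Hpos hs hE hmin (hZsub Z HZ) h0) eqxx.
  - apply/eqP => hT.
    have h0 : (~: Z) :&: T = set0.
      apply/setP => v; have /setP/(_ v) := hT; rewrite !inE.
      by case: (v \in Z); case: (v \in T).
    have dC : delta ep1 ep2 (~: Z) = delta ep1 ep2 Z.
      by apply/setP => e; rewrite !inE; case: (ep1 e \in Z); case: (ep2 e \in Z).
    have hsub : delta ep1 ep2 (~: Z) \subset ES by rewrite dC; apply: hZsub.
    move: hne; have := term_Z Hpos hs hE hmin hsub h0.
    by rewrite dC => ->; rewrite eqxx.
have [s hs'] : exists s, s \in S by apply/set0Pn.
have [t ht hnt] : exists2 t, t \in T & t \notin S.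
  apply/subsetPn; apply: contra hST' => hTS; by rewrite eqEsubset hST hTS.
have hsT : s \in T := subsetP hST s hs'.
have [y [w [hy hw]]] : exists y w, y \in W /\ w \notin W.
  case/orP: hs => /eqP hW.
    exists s, t; split.
      by have /setP/(_ s) := hW; rewrite !inE hs' hsT andbT => ->.
    by have /setP/(_ t) := hW; rewrite !inE ht (negbTE hnt) andbT => ->.
  exists t, s; split.
    by have /setP/(_ t) := hW; rewrite !inE ht hnt andbT => ->.
  by have /setP/(_ s) := hW; rewrite !inE hs' hsT andbT => ->.
have hne : ES != set0 by rewrite hE; apply: (conn_delta Hc hy hw).
exists #|P|, (fun i => enum_val i :&: T), (fun i => delta ep1 ep2 (enum_val i)); split.
- case/set0Pn: hne => e He; rewrite hE in He; case/P3: He => Z HZ _.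
  by rewrite card_gt0; apply/set0Pn; exists Z.
- by move=> i; case: (Te _ (enum_valP i)).
- by move=> i; case: (Te _ (enum_valP i)).
- move=> i j Hij; apply: P2; try exact: enum_valP.
  by apply: contra Hij => /eqP /enum_val_inj ->.
- apply/setP => e; apply/idP/bigcupP => [He | [i _ Hi]].
    rewrite hE in He; case/P3: He => Z HZ HeZ.
    by exists (enum_rank_in HZ Z) => //; rewrite enum_rankK_in.
  by rewrite hE; apply/P3; exists (enum_val i) => //; exact: enum_valP.
Qed.
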